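(* Let $R$ be a right or left Noetherian ring that is finitely presented (as a ring, or as an algebra over a fixed commutative base). Then every homomorphic image of $R$ is also finitely presented (in the same sense).
   Context: A ring (resp. algebra) is finitely presented if it is isomorphic to a free ring (resp. free algebra) on finitely many generators modulo a two-sided ideal generated by finitely many elements. *)

(* Defs.v *)
From HB Require Import structures.
From mathcomp Require Import all_boot all_order all_algebra.
From mathcomp.multinomials Require Import monalg.
Set Implicit Arguments. Unset Strict Implicit. Unset Printing Implicit Defensive.
Import GRing.Theory.
Local Open Scope ring_scope.

(* The free (non-commutative) k-algebra on n generators: the monoid algebra
   of the free monoid {fmonom 'I_n} (words in the letters 0..n-1) over k. *)
Definition free_alg (k : comNzRingType) (n : nat) := {malg k[{fmonom 'I_n}]}.
Definition free_ring (n : nat) := free_alg int n.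

Definition in_tsideal (A : pzRingType) (s : seq A) (x : A) : Prop :=
  exists t : seq (A * 'I_(size s) * A),
    x = \sum_(u <- t) u.1.1 * s`_(u.1.2) * u.2.

(* A ring A is finitely presented: A is isomorphic to a free ring on finitely
   many generators modulo a two-sided ideal generated by finitely many
   elements, i.e. there is a surjective ring morphism from a free ring of
   finite rank whose kernel is a finitely generated two-sided ideal. *)
Definition fp_ring (A : pzRingType) : Prop :=
  exists (n : nat) (f : {rmorphism free_ring n -> A}) (rels : seq (free_ring n)),
    (forall a : A, exists p, f p = a) /\
    (forall p, f p = 0 <-> in_tsideal rels p).

(* A k-algebra is a ring A together with a ring morphism phi : k -> A with
   central image.  (A, phi) is finitely presented as a k-algebra when there is
   a surjective k-algebra morphism (a ring morphism compatible with the
   structure maps) from a free k-algebra of finite rank whose kernel is a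
   finitely generated two-sided ideal. *)
Definition fp_alg (k : comNzRingType) (A : pzRingType) (phi : k -> A) : Prop :=
  exists (n : nat) (f : {rmorphism free_alg k n -> A}) (rels : seq (free_alg k n)),
    (forall c : k, f (c%:MP) = phi c) /\
    (forall a : A, exists p, f p = a) /\
    (forall p, f p = 0 <-> in_tsideal rels p).

Definition right_ideal (R : pzRingType) (I : R -> Prop) : Prop :=
  [/\ I 0, (forall x y, I x -> I y -> I (x + y)) & (forall x r, I x -> I (x * r))].
Definition left_ideal (R : pzRingType) (I : R -> Prop) : Prop :=
  [/\ I 0, (forall x y, I x -> I y -> I (x + y)) & (forall x r, I x -> I (r * x))].

Definition right_noetherian (R : pzRingType) : Prop :=
  forall I : R -> Prop, right_ideal I ->
    exists s : seq R, forall x, I x <->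
      exists c : 'I_(size s) -> R, x = \sum_(i < size s) s`_i * c i.
Definition left_noetherian (R : pzRingType) : Prop :=
  forall I : R -> Prop, left_ideal I ->
    exists s : seq R, forall x, I x <->
      exists c : 'I_(size s) -> R, x = \sum_(i < size s) c i * s`_i.

(* Main.v *)
Require Import Defs.
From HB Require Import structures.
From mathcomp Require Import all_boot all_order all_algebra.
From mathcomp.multinomials Require Import monalg.
Local Open Scope ring_scope.
Import GRing.Theory.

Lemma tsid0 (A : pzRingType) (s : seq A) : in_tsideal s 0.
Proof. by exists [::]; rewrite big_nil. Qed.

Lemma tsidD (A : pzRingType) (s : seq A) x y :
  in_tsideal s x -> in_tsideal s y -> in_tsideal s (x + y).
Proof. by move=> [t1 ->] [t2 ->]; exists (t1 ++ t2); rewrite big_cat. Qed.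

Lemma tsidM {A : pzRingType} {s : seq A} {y} a b :
  in_tsideal s y -> in_tsideal s (a * y * b).
Proof.
move=> [t ->]; exists [seq (a * u.1.1, u.1.2, u.2 * b) | u <- t].
rewrite big_map mulr_sumr mulr_suml; apply: eq_bigr => u _ /=.
by rewrite !mulrA.
Qed.

Lemma tsidN (A : pzRingType) (s : seq A) y :
  in_tsideal s y -> in_tsideal s (- y).
Proof. by move=> /(tsidM (-1) 1); rewrite mulr1 mulN1r. Qed.

Lemma tsid_mem (A : pzRingType) (s : seq A) (j : 'I_(size s)) : in_tsideal s s`_j.
Proof. by exists [:: (1, j, 1)]; rewrite big_seq1 /= mulr1 mul1r. Qed.

Lemma tsid_sub (A : pzRingType) (s s' : seq A) x :
  (forall j : 'I_(size s), in_tsideal s' s`_j) -> in_tsideal s x -> in_tsideal s' x.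
Proof.
move=> H [t ->]; elim: t => [|u t IH]; first by rewrite big_nil; exact: tsid0.
by rewrite big_cons; apply: tsidD => //; apply: tsidM.
Qed.

Lemma tsid_catl (A : pzRingType) (s s' : seq A) x :
  in_tsideal s x -> in_tsideal (s ++ s') x.
Proof.
apply: tsid_sub => j.
have hj : (j < size (s ++ s'))%N by rewrite size_cat ltn_addr.
have -> : s`_j = (s ++ s')`_(Ordinal hj) by rewrite /= nth_cat ltn_ord.
exact: tsid_mem.
Qed.

Lemma tsid_catr (A : pzRingType) (s s' : seq A) x :
  in_tsideal s' x -> in_tsideal (s ++ s') x.
Proof.
apply: tsid_sub => j.
have hj : (size s + j < size (s ++ s'))%N by rewrite size_cat ltn_add2l.
have -> : s'`_j = (s ++ s')`_(Ordinal hj).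
  by rewrite /= nth_cat ltnNge leq_addr /= addKn.
exact: tsid_mem.
Qed.

Lemma lift_seq (F R : pzRingType) (f : F -> R) (s : seq R) :
  (forall a, exists p, f p = a) -> exists ps, map f ps = s.
Proof.
move=> surj; elim: s => [|a s [ps eps]]; first by exists [::].
by have [p fp] := surj a; exists (p :: ps); rewrite /= fp eps.
Qed.

Lemma tsid_nth (A : pzRingType) (s : seq A) k : (k < size s)%N -> in_tsideal s s`_k.
Proof. by move=> hk; exact: (@tsid_mem A s (Ordinal hk)). Qed.

Lemma sum_lift (F R : pzRingType) (f : {rmorphism F -> R}) (T : seq F) n
  (c : 'I_n -> R) (v : 'I_n -> F) (side : bool) :
  (forall a, exists p, f p = a) -> (forall i, in_tsideal T (v i)) ->
  exists y, f y = \sum_(i < n) (if side then f (v i) * c i else c i * f (v i))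
            /\ in_tsideal T y.
Proof.
move=> surj hv; elim: n c v hv => [|n IH] c v hv.
  by exists 0; rewrite big_ord0 rmorph0; split => //; exact: tsid0.
have [y [fy ty]] := IH (fun i => c (widen_ord (leqnSn n) i)) (fun i => v (widen_ord (leqnSn n) i))
  (fun i => hv _).
have [q fq] := surj (c ord_max).
exists (y + (if side then 1 * v ord_max * q else q * v ord_max * 1)).
rewrite big_ord_recr /= rmorphD fy; split.
  by clear IH; case: side {fy}; rewrite !rmorphM rmorph1 ?mulr1 ?mul1r fq.
apply: tsidD => //.
by case: side {IH fy} => /=; apply: tsidM.
Qed.

Lemma gen_sum (R : pzRingType) (s : seq R) (side : bool) k : (k < size s)%N ->
  s`_k = \sum_(i < size s) (if side then s`_i * (val i == k)%:R else (val i == k)%:R * s`_i).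
Proof.
move=> hk; rewrite (bigD1 (Ordinal hk)) //= eqxx big1 ?addr0.
  by case: side; rewrite ?mulr1 ?mul1r.
move=> i; rewrite -val_eqE /= => /negbTE ->.
by case: side; rewrite ?mulr0 ?mul0r.
Qed.

Lemma key (F R S : pzRingType) (f : {rmorphism F -> R}) (g : {rmorphism R -> S})
  (rels : seq F) :
  right_noetherian R \/ left_noetherian R ->
  (forall a, exists p, f p = a) ->
  (forall p, f p = 0 <-> in_tsideal rels p) ->
  exists rels', forall p, g (f p) = 0 <-> in_tsideal rels' p.
Proof.
move=> noeth surj ker.
have gK : forall (s : seq R) (side : bool),
   (forall x, g x = 0 <-> exists c : 'I_(size s) -> R,
      x = \sum_(i < size s) (if side then s`_i * c i else c i * s`_i)) ->
   exists rels', forall p, g (f p) = 0 <-> in_tsideal rels' p.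
  move=> s side Hs.
  have [ps eps] := @lift_seq F R f s surj; subst s.
  have szp : size (map f ps) = size ps by rewrite size_map.
  exists (rels ++ ps) => p; split.
    move=> /Hs [c hc].
    have hv : forall i : 'I_(size (map f ps)), in_tsideal ps ps`_i.
      by move=> i; apply: tsid_nth; rewrite -szp.
    have [y [fy ty]] := @sum_lift F R f ps _ c (fun i => ps`_(val i)) side surj hv.
    have -> : p = (p - y) + y by rewrite subrK.
    apply: tsidD; last exact: tsid_catr.
    apply: tsid_catl; apply/ker.
    rewrite rmorphB hc fy; apply/eqP; rewrite subr_eq0; apply/eqP.
    by apply: eq_bigr => i _; rewrite (nth_map 0) // -szp.
  move=> [t ->]; rewrite !rmorph_sum; apply: big1 => u _; rewrite !rmorphM.
  rewrite nth_cat; case: ifP => hlt.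
    have -> : f rels`_(u.1.2) = 0 by apply/ker/tsid_nth.
    by rewrite rmorph0 mulr0 mul0r.
  have hk : (u.1.2 - size rels < size ps)%N.
    have : (u.1.2 < size rels + size ps)%N by rewrite -size_cat ltn_ord.
    move=> h.
    by rewrite ltn_subLR // leqNgt hlt.
  have -> : g (f ps`_(u.1.2 - size rels)) = 0.
    rewrite -(nth_map 0 0) //; apply/Hs; exists (fun i => (val i == (u.1.2 - size rels)%N)%:R).
    by apply: gen_sum; rewrite szp.
  by rewrite mulr0 mul0r.
have Iid : right_ideal (fun y : R => g y = 0) /\ left_ideal (fun y : R => g y = 0).
  split; split; first 1 [exact: rmorph0] || (try exact: rmorph0);
    try (by move=> x y hx hy; rewrite rmorphD hx hy addr0);
    by move=> x r hx; rewrite rmorphM hx ?mul0r ?mulr0.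
case: noeth => [rn | ln].
  by have [s Hs] := rn _ Iid.1; exact: (gK s true Hs).
by have [s Hs] := ln _ Iid.2; exact: (gK s false Hs).
Qed.

Theorem lemma4p2 :
  (forall (R : pzRingType),
     right_noetherian R \/ left_noetherian R -> fp_ring R ->
     forall (S : pzRingType) (g : {rmorphism R -> S}),
       (forall s : S, exists r, g r = s) -> fp_ring S)
  /\
  (forall (k : comNzRingType) (R : pzRingType) (phi : {rmorphism k -> R}),
     (forall (c : k) (r : R), phi c * r = r * phi c) ->
     right_noetherian R \/ left_noetherian R -> fp_alg phi ->
     forall (S : pzRingType) (g : {rmorphism R -> S}),
       (forall s : S, exists r, g r = s) -> fp_alg (g \o phi)).
Proof.
have surjc : forall (A B C : pzRingType) (f : A -> B) (g : B -> C),
    (forall b, exists a, f a = b) -> (forall c, exists b, g b = c) ->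
    forall c, exists a, g (f a) = c.
  move=> A B C f g hf hg c; have [b <-] := hg c; have [a <-] := hf b; by exists a.
split.
  move=> R noeth [n [f [rels [sf kf]]]] S g sg.
  have [rels' H] := @key _ _ _ f g rels noeth sf kf.
  exists n, (g \o f), rels'; split => //.
  by move=> c; have [b <-] := sg c; have [a <-] := sf b; exists a.
move=> k R phi _ noeth [n [f [rels [hphi [sf kf]]]]] S g sg.
have [rels' H] := @key _ _ _ f g rels noeth sf kf.
exists n, (g \o f), rels'; split; first by move=> c /=; rewrite hphi.
split => //.
by move=> c'; have [b <-] := sg c'; have [a <-] := sf b; exists a.
Qed.
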